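(* Let $q$ be a prime power, $\eta\ge0$ an integer, $(\delta_T,\delta_X)\in\mathbb{Z}\times\mathbb{N}$ with $\delta=\delta_T+\eta\delta_X\ge0$. For every monomial $M$ of bidegree $(\delta_T,\delta_X)$, the leading monomial of $\pi_{(\delta_T,\delta_X)}(M)$ with respect to the monomial order $<$ is $\le M$.
   Context: $R=\mathbb{F}_q[T_1,T_2,X_1,X_2]$; the bidegree of $T_1^{c_1}T_2^{c_2}X_1^{d_1}X_2^{d_2}$ is $(c_1+c_2-\eta d_1,d_1+d_2)$; $R(\delta_T,\delta_X)$ is the span of monomials of that bidegree. Monomial order: $T_1^{c'_1}T_2^{c'_2}X_1^{d'_1}X_2^{d'_2}<T_1^{c_1}T_2^{c_2}X_1^{d_1}X_2^{d_2}$ iff $d'_1+d'_2<d_1+d_2$, or ($d'_1+d'_2=d_1+d_2$ and $d'_2<d_2$), or ($d'_1=d_1$, $d'_2=d_2$, $c'_2<c_2$), or ($d'_1=d_1$, $d'_2=d_2$, $c'_2=c_2$, $c'_1<c_1$). $\mathcal{P}=\{(a,b)\in\mathbb{N}^2:a\le\delta_X,\eta a+b\le\delta\}$; $M(d_2,c_2)=T_1^{\delta-\eta d_2-c_2}T_2^{c_2}X_1^{\delta_X-d_2}X_2^{d_2}$ for $(d_2,c_2)\in\mathcal{P}$ (these are exactly the monomials of bidegree $(\delta_T,\delta_X)$). $A=\delta_X$ if $\delta_T\ge0$, $A=\delta/\eta$ if $\delta_T<0$. Condition (H): $\eta\ge2$, $\delta_T<0$, $\eta\mid\delta_T$, $q\le\delta_X+\delta_T/\eta$.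 $p:\mathcal{P}\to\mathcal{P}$, $(d_2,c_2)\mapsto(d'_2,c'_2)$: $d'_2=d_2$ if $d_2\in\{0,A\}$, otherwise $d'_2\in\{1,\dots,q-1\}$ with $d'_2\equiv d_2\pmod{q-1}$; $c'_2=0$ if $c_2=0$; $c'_2=\delta-\eta d'_2$ if $c_2=\delta-\eta d_2$; otherwise $c'_2\in\{1,\dots,q-1\}$ with $c'_2\equiv c_2\pmod{q-1}$. The linear map $\pi_{(\delta_T,\delta_X)}$ on $R(\delta_T,\delta_X)$ is $\pi(M(d_2,c_2))=M(p(d_2,c_2))$, except when (H) holds and $(d_2,c_2)=(\delta/\eta,0)$: then with $\delta/\eta=k(q-1)+r$, $k\in\mathbb{N}$, $r\in\{1,\dots,q-1\}$, $\pi(M(\delta/\eta,0))=M(r,0)+M(r,\eta k(q-1))-M(r,q-1)$. *)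

(* Defs.v *)
From HB Require Import structures.
From mathcomp Require Import all_boot all_order all_algebra all_field.
Set Implicit Arguments. Unset Strict Implicit. Unset Printing Implicit Defensive.
Import Order.TTheory GRing.Theory Num.Theory.

(* Exponent vector of T1^c1 T2^c2 X1^d1 X2^d2, encoded as (((c1, c2), d1), d2). *)
Definition expo := (nat * nat * nat * nat)%type.
Definition e_c1 (e : expo) : nat := e.1.1.1.
Definition e_c2 (e : expo) : nat := e.1.1.2.
Definition e_d1 (e : expo) : nat := e.1.2.
Definition e_d2 (e : expo) : nat := e.2.

Definition mono_lt (e' e : expo) : bool :=
  [|| e_d1 e' + e_d2 e' < e_d1 e + e_d2 e,
      (e_d1 e' + e_d2 e' == e_d1 e + e_d2 e) && (e_d2 e' < e_d2 e),
      [&& e_d1 e' == e_d1 e, e_d2 e' == e_d2 e & e_c2 e' < e_c2 e]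
    | [&& e_d1 e' == e_d1 e, e_d2 e' == e_d2 e, e_c2 e' == e_c2 e
        & e_c1 e' < e_c1 e]].
Definition mono_le (e' e : expo) : bool := (e' == e) || mono_lt e' e.

(* delta = delta_T + eta * delta_X  (assumed >= 0, so taken as a nat). *)
Definition delta (eta dX : nat) (dT : int) : nat := absz (dT + (eta * dX)%:Z)%R.

Definition inP (eta dX : nat) (dT : int) (a b : nat) : bool :=
  (a <= dX) && (eta * a + b <= delta eta dX dT).

Definition Mmon (eta dX : nat) (dT : int) (d2 c2 : nat) : expo :=
  (delta eta dX dT - eta * d2 - c2, c2, dX - d2, d2).

(* "d2 = A": A = delta_X if delta_T >= 0, A = delta/eta (rational) otherwise *)
Definition isA (eta dX : nat) (dT : int) (d2 : nat) : bool :=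
  if (0 <= dT)%R then d2 == dX else eta * d2 == delta eta dX dT.

(* the unique representative in {1,...,q-1} of n (n >= 1) modulo q-1 *)
Definition red (q n : nat) : nat := ((n.-1) %% q.-1).+1.

Definition pmap (q eta dX : nat) (dT : int) (d2 c2 : nat) : nat * nat :=
  let dl := delta eta dX dT in
  let d2' := if (d2 == 0) || isA eta dX dT d2 then d2 else red q d2 in
  let c2' := if c2 == 0 then 0
             else if c2 == dl - eta * d2 then dl - eta * d2'
             else red q c2 in
  (d2', c2').

Definition condH (q eta dX : nat) (dT : int) : bool :=
  [&& 2 <= eta, (dT < 0)%R, (eta%:Z %| dT)%Z
    & (q%:Z <= dX%:Z + (dT %/ eta%:Z)%Z)%R].

(* An element of R, written as a formal F-linear combination of monomials. *)
Definition rpoly (F : fieldType) := seq (F * expo).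
Definition coefp (F : fieldType) (p : rpoly F) (e : expo) : F :=
  (\sum_(t <- p | t.2 == e) t.1)%R.

Definition pi_map (F : fieldType) (q eta dX : nat) (dT : int) (d2 c2 : nat)
  : rpoly F :=
  let dl := delta eta dX dT in
  if [&& condH q eta dX dT, eta * d2 == dl & c2 == 0] then
    let n := dl %/ eta in
    let r := red q n in
    let k := (n.-1) %/ q.-1 in
    [:: (1%R, Mmon eta dX dT r 0);
        (1%R, Mmon eta dX dT r (eta * k * q.-1));
        ((-1)%R, Mmon eta dX dT r q.-1)]
  else
    let pc := pmap q eta dX dT d2 c2 in
    [:: (1%R, Mmon eta dX dT pc.1 pc.2)].

Definition is_leading (F : fieldType) (p : rpoly F) (m : expo) : Prop :=
  coefp p m != 0%R /\ forall m', coefp p m' != 0%R -> mono_le m' m.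

(* Main.v *)
Require Import Defs.
From HB Require Import structures.
From mathcomp Require Import all_boot all_order all_algebra all_field.
From mathcomp Require Import zify ring.
Import Order.TTheory GRing.Theory Num.Theory.

Lemma coefp_mem (F : fieldType) (p : rpoly F) (m : expo) :
  Defs.coefp p m != 0%R -> exists t, t \in p /\ t.2 = m.
Proof.
elim: p => [|t p IH]; first by rewrite /Defs.coefp big_nil eqxx.
rewrite /Defs.coefp big_cons; case: (t.2 =P m) => [<-|_] H.
  by exists t; rewrite mem_head.
by case: (IH H) => u [hu <-]; exists u; rewrite in_cons hu orbT.
Qed.

Lemma lt_d2 eta dX dT a b c d : a < c -> c <= dX ->
  mono_lt (Mmon eta dX dT a b) (Mmon eta dX dT c d).
Proof.
move=> ac cX; apply/orP; right; apply/orP; left.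
rewrite /Mmon /e_d1 /e_d2 /=; apply/andP; split; [apply/eqP; lia | exact ac].
Qed.

Lemma red_le q n : 0 < n -> red q n <= n.
Proof. move=> n0; rewrite /red; have := leq_mod n.-1 q.-1; lia. Qed.

Theorem lemma3p5 (F : finFieldType) (q eta dX : nat) (dT : int) :
  #|F| = q ->
  (0 <= dT + (eta * dX)%:Z)%R ->
  forall d2 c2 : nat, inP eta dX dT d2 c2 ->
  forall m : expo, is_leading (pi_map F q eta dX dT d2 c2) m ->
  mono_le m (Mmon eta dX dT d2 c2).
Proof.
move=> hq hpos d2 c2 /andP [hd2 hc2] m [hm _].
have q2 : 1 < q by rewrite -hq; exact: card_finNzRing_gt1.
case: (coefp_mem _ _ _ hm) => t [ht <-] {hm}.
move: ht; rewrite /pi_map.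
case: ifP => [/and3P [hH /eqP he /eqP hc] | _].
  move: hH => /and4P [h2 hneg hdvd hqle].
  subst c2.
  (* d2 = dX + dT / eta >= q *)
  have hd2q : q <= d2.
    have ez : (eta%:Z != 0)%R by rewrite eqz_nat; lia.
    have hdT : dT = ((dT %/ eta%:Z)%Z * eta%:Z)%R by rewrite divzK.
    have hdl : ((delta eta dX dT)%:Z = dT + (eta * dX)%:Z)%R.
      by rewrite /delta gez0_abs.
    have : (eta%:Z * d2%:Z = eta%:Z * ((dT %/ eta%:Z)%Z + dX%:Z))%R.
      rewrite -PoszM he hdl {1}hdT mulrDr PoszM; ring.
    move/(mulfI ez) => e2.
    suff : (q%:Z <= d2%:Z)%R by rewrite lez_nat.
    by rewrite e2 addrC.
  have hn : delta eta dX dT %/ eta = d2.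
    by rewrite -he mulKn //; lia.
  rewrite hn.
  have hr : red q d2 < d2.
    rewrite /red; have : 0 < q.-1 by lia.
    move=> /(ltn_pmod d2.-1); lia.
  rewrite !inE => /or3P [] /eqP -> /=; apply/orP; right; exact: lt_d2.
rewrite mem_seq1 => /eqP -> /=.
rewrite /pmap /=.
set d2' := if _ then _ else _.
have hd2' : d2' <= d2.
  rewrite /d2'; case: ifP => // /norP [h0 _]; apply: red_le; lia.
case: (ltnP d2' d2) => hlt; first by apply/orP; right; exact: lt_d2.
have e : d2' = d2 by lia.
rewrite e.
case: ifP => [/eqP ->|nz]; first by rewrite /mono_le eqxx.
case: ifP => [/eqP ->|_]; first by rewrite /mono_le eqxx.
have c0 : 0 < c2 by move/eqP: nz; lia.
have := red_le q c2 c0.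
rewrite leq_eqVlt => /orP [/eqP ->|hl]; first by rewrite /mono_le eqxx.
apply/orP; right; apply/orP; right; apply/orP; right; apply/orP; left.
by rewrite /e_d1 /e_d2 /e_c2 /Mmon !eqxx hl.
Qed.
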